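(* Let $f(x)=a_nx^n+a_{n-1}x^{n-1}+\dots+a_1x+a_0\in\mathbb{Z}[x]$. Suppose that there exists a prime $p$ such that $p\nmid a_n$, $p\mid a_i$ for all $0\leq i\leq n-1$, $p^2\mid a_j$ for all $0\leq j\leq\lfloor n/2\rfloor$, and $p^3\nmid a_0$. Then: (1) if $n$ is odd, $f(x)$ is irreducible over $\mathbb{Z}$; (2) if $n$ is even, then either $f(x)$ is irreducible over $\mathbb{Z}$, or $f(x)$ is a product of exactly two irreducible polynomials in $\mathbb{Z}[x]$ of equal degree, each of which is Eisenstein with respect to $p$.
   Context: A nonconstant polynomial in $\mathbb{Z}[x]$ is called reducible over $\mathbb{Z}$ if it can be written as a product of two nonconstant polynomials in $\mathbb{Z}[x]$; otherwise it is irreducible over $\mathbb{Z}$. A polynomial $b_rx^r+\dots+b_1x+b_0\in\mathbb{Z}[x]$ of positive degree $r$ is Eisenstein with respect to a prime $p$ if $p\nmid b_r$, $p\mid b_i$ for all $0\leq i\leq r-1$, and $p^2\nmid b_0$. *)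

(* Defs.v *)
From HB Require Import structures.
From mathcomp Require Import all_boot all_order all_algebra.
Set Implicit Arguments. Unset Strict Implicit. Unset Printing Implicit Defensive.
Import Order.TTheory GRing.Theory Num.Theory.
Local Open Scope ring_scope.

(* Polynomials over Z are {poly int}; degree of g is (size g).-1. *)

Definition nonconstZ (g : {poly int}) : Prop := (1 < size g)%N.

Definition reducibleZ (g : {poly int}) : Prop :=
  exists h k : {poly int}, [/\ nonconstZ h, nonconstZ k & g = h * k].

Definition irreducibleZ (g : {poly int}) : Prop :=
  nonconstZ g /\ ~ reducibleZ g.

Definition eisensteinZ (p : nat) (g : {poly int}) : Prop :=
  [/\ (0 < (size g).-1)%N,
      ~ (p%:Z %| g`_((size g).-1))%Z,
      (forall i : nat, (i < (size g).-1)%N -> (p%:Z %| g`_i)%Z)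
    & ~ ((p ^ 2)%N%:Z %| g`_0)%Z].

(* Main.v *)
Require Import Defs.
From HB Require Import structures.
From mathcomp Require Import all_boot all_order all_algebra.
From mathcomp Require Import zify.
From Stdlib Require Import Classical.
Import Order.TTheory GRing.Theory Num.Theory.
Set Implicit Arguments. Unset Strict Implicit.
Local Open Scope ring_scope.
Set Implicit Arguments. Unset Strict Implicit.
Local Open Scope ring_scope.

Lemma EuclidZ p (a b : int) : prime p -> (p%:Z %| a*b)%Z = (p%:Z %| a)%Z || (p%:Z %| b)%Z.
Proof. move=> pp. by rewrite !dvdzE abszM Euclid_dvdM. Qed.

Lemma arith1 (a b c : nat) : (a < c)%N -> (c < (a+b).+1)%N -> (a + b - c < b)%N.
Proof. lia. Qed.

Lemma arith2 (i0 j0 su sv : nat) : (0 < su)%N -> (0 < sv)%N -> (i0 <= su.-1)%N -> (j0 <= sv.-1)%N -> ((su + sv).-1.-1 <= i0 + j0)%N -> su.-1 = i0.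
Proof. lia. Qed.

Lemma key p (u v : {poly int}) : prime p ->
  ~ (p%:Z %| lead_coef (u*v))%Z ->
  (forall i, (i < (size (u*v)%R).-1)%N -> (p%:Z %| (u*v)`_i)%Z) ->
  forall i, (i < (size u).-1)%N -> (p%:Z %| u`_i)%Z.
Proof.
move=> pp nl Hd.
have u0 : u != 0 by apply/eqP=> u0; apply: nl; rewrite u0 mul0r lead_coef0 dvdz0.
have v0 : v != 0 by apply/eqP=> v0; apply: nl; rewrite v0 mulr0 lead_coef0 dvdz0.
move/negP: nl; rewrite lead_coefM EuclidZ // negb_or => /andP[nlu nlv].
have exu : exists i, ~~ (p%:Z %| u`_i)%Z by exists (size u).-1.
have exv : exists i, ~~ (p%:Z %| v`_i)%Z by exists (size v).-1.
case: (ex_minnP exu) => i0 Hi0 mini0.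
case: (ex_minnP exv) => j0 Hj0 minj0.
have i0le : (i0 <= (size u).-1)%N := mini0 _ nlu.
have j0le : (j0 <= (size v).-1)%N := minj0 _ nlv.
have divlt (i : nat) : (i < i0)%N -> (p%:Z %| u`_i)%Z.
  by move=> lt; apply/negPn/negP => /mini0; rewrite leqNgt lt.
have divltv (i : nat) : (i < j0)%N -> (p%:Z %| v`_i)%Z.
  by move=> lt; apply/negPn/negP => /minj0; rewrite leqNgt lt.
have hlt : (i0 < (i0 + j0).+1)%N by rewrite ltnS leq_addr.
have nd : ~~ (p%:Z %| (u*v)`_(i0+j0))%Z.
  rewrite coefM (bigD1 (Ordinal hlt)) //= addKn.
  set rest := \sum_(i < _ | _) _.
  have Hrest : (p%:Z %| rest)%Z.
    apply: rpred_sum => i ne.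
    case: (ltngtP i i0) => [lt|gt|eq].
    - by apply: dvdz_mulr; apply: divlt.
    - apply: dvdz_mull; apply: divltv.
      by apply: (@arith1 i0 j0 i) => //; exact: ltn_ord.
    - by move: ne; rewrite -(inj_eq val_inj) /= eq eqxx.
  apply/negP => H; move: (rpredB H Hrest); rewrite addrK EuclidZ //.
  by apply/negP; rewrite negb_or Hi0 Hj0.
have ge : ((size (u*v)%R).-1 <= i0 + j0)%N.
  by rewrite leqNgt; apply/negP => /Hd; apply/negP.
rewrite size_mul // in ge.
have su : (0 < size u)%N by rewrite size_poly_gt0.
have sv : (0 < size v)%N by rewrite size_poly_gt0.
rewrite (arith2 su sv i0le j0le ge).
exact: divlt.
Qed.

Lemma e2 p : ((p ^ 2)%N%:Z) = p%:Z * p%:Z.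
Proof. by rewrite -PoszM mulnn. Qed.

Lemma e3 p : ((p ^ 3)%N%:Z) = p%:Z * (p ^ 2)%N%:Z.
Proof. by rewrite -PoszM -expnS. Qed.

Lemma arith3 (n : nat) : (1 < n)%N -> (0 < n.-1)%N.
Proof. lia. Qed.

Lemma arith7 (a b : nat) : (1 < a)%N -> (a < b)%N -> (a.-1 < b.-1)%N.
Proof. lia. Qed.
Lemma arith8 (a : nat) : (a <= 1)%N -> (a.-1 = 0)%N.
Proof. lia. Qed.
Lemma arith9 (a : nat) : (0 < a.-1)%N -> (1 < a)%N.
Proof. lia. Qed.
Lemma arith10 (k r s : nat) : (r < s)%N -> (k < r)%N -> (r - k < s)%N.
Proof. lia. Qed.

Lemma factor_props p (f g h : {poly int}) : prime p ->
  ~ (p%:Z %| f`_((size f).-1))%Z ->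
  (forall i : nat, (i < (size f).-1)%N -> (p%:Z %| f`_i)%Z) ->
  ~ ((p ^ 3)%N%:Z %| f`_0)%Z ->
  f = g * h -> nonconstZ h ->
  [/\ ~ (p%:Z %| lead_coef g)%Z,
      (forall i, (i < (size g).-1)%N -> (p%:Z %| g`_i)%Z),
      (forall i, (i < (size h).-1)%N -> (p%:Z %| h`_i)%Z)
    & ~ ((p ^ 2)%N%:Z %| g`_0)%Z].
Proof.
move=> pp Hl Hd H3 Hf nh.
have Hl' : ~ (p%:Z %| lead_coef (g * h))%Z by rewrite -Hf.
have Hd' : forall i, (i < (size (g * h)%R).-1)%N -> (p%:Z %| (g * h)`_i)%Z by rewrite -Hf.
have Hg := key pp Hl' Hd'.
have Hl2 : ~ (p%:Z %| lead_coef (h * g))%Z by rewrite mulrC.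
have Hd2 : forall i, (i < (size (h * g)%R).-1)%N -> (p%:Z %| (h * g)`_i)%Z by rewrite mulrC.
have Hh := key pp Hl2 Hd2.
split => //.
- move=> dg; apply: Hl'; rewrite lead_coefM; exact: dvdz_mulr.
- move=> dg; apply: H3; rewrite Hf coef0M e3 mulrC; apply: dvdz_mul => //.
  apply: Hh; exact: arith3.
Qed.

Lemma arith4 (r s : nat) : (r < s)%N -> (r <= (r + s)./2)%N.
Proof.
move=> lt. rewrite -{1}(doubleK r). apply: half_leq. rewrite -addnn leq_add2l. exact: ltnW.
Qed.

Lemma arith5 (a b : nat) : (1 < a)%N -> (1 < b)%N -> ((a + b).-1.-1 = a.-1 + b.-1)%N.
Proof. lia. Qed.

Lemma no_lt p (f g h : {poly int}) : prime p ->
  ~ (p%:Z %| f`_((size f).-1))%Z ->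
  (forall i : nat, (i < (size f).-1)%N -> (p%:Z %| f`_i)%Z) ->
  (forall j : nat, (j <= ((size f).-1)./2)%N -> ((p ^ 2)%N%:Z %| f`_j)%Z) ->
  ~ ((p ^ 3)%N%:Z %| f`_0)%Z ->
  f = g * h -> nonconstZ g -> nonconstZ h -> ~ (size g < size h)%N.
Proof.
move=> pp Hl Hd Hd2 H3 Hf ng nh lt.
have [lg dg dh _] := factor_props pp Hl Hd H3 Hf nh.
have Hf' : f = h * g by rewrite Hf mulrC.
have [lh _ _ h0] := factor_props pp Hl Hd H3 Hf' ng.
have g0 : g != 0 by apply/eqP => g0; move: ng; rewrite /nonconstZ g0 size_poly0.
have h0' : h != 0 by apply/eqP => h0'; move: nh; rewrite /nonconstZ h0' size_poly0.
set r := (size g).-1.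
have rs : (r < (size h).-1)%N by rewrite /r; apply: arith7.
have sz : (size f).-1 = (r + (size h).-1)%N by rewrite Hf size_mul // arith5.
have := Hd2 r; rewrite sz arith4 // => /(_ isT).
rewrite Hf coefM big_ord_recr /= subnn.
set S := \sum_(i < r) _.
have HS : ((p ^ 2)%N%:Z %| S)%Z.
  apply: rpred_sum => i _; rewrite e2; apply: dvdz_mul.
  - apply: dg; exact: ltn_ord.
  - apply: dh; apply: arith10 rs (ltn_ord i).
move=> H; move: (rpredB H HS); rewrite addrAC subrr add0r.
have /dvdzP [k hk] : (p%:Z %| h`_0)%Z by apply: dh; exact: arith3.
rewrite hk mulrA e2 dvdz_mul2r; last by rewrite eqz_nat -lt0n prime_gt0.
rewrite EuclidZ // => /orP [|].
- by move=> H'; apply: lg.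
- move=> pk; apply: h0; rewrite hk e2; apply: dvdz_mul => //.
Qed.

Lemma eis_irr p g : prime p -> eisensteinZ p g -> irreducibleZ g.
Proof.
move=> pp [deg nl dv n2]; split; first by rewrite /nonconstZ; apply: arith9.
move=> [u [v [nu nv Hg]]].
have H3 : ~ ((p ^ 3)%N%:Z %| g`_0)%Z by move=> H; apply: n2; apply: dvdz_trans H; rewrite e3; apply: dvdz_mull.
have [_ du dv' _] := factor_props pp nl dv H3 Hg nv.
apply: n2; rewrite Hg coef0M e2; apply: dvdz_mul.
- apply: du; exact: arith3.
- apply: dv'; exact: arith3.
Qed.

Lemma arith6 (a b n : nat) : (1 < a)%N -> a = b -> (n = (a + b).-1.-1)%N -> ~~ odd n.
Proof. move=> ? <- ->. have -> : ((a + a).-1.-1 = (a.-1).*2)%N by rewrite -addnn; lia. by rewrite odd_double. Qed.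

Theorem theorem2p2 (f : {poly int}) (p : nat) :
  prime p ->
  ~ (p%:Z %| f`_((size f).-1))%Z ->
  (forall i : nat, (i < (size f).-1)%N -> (p%:Z %| f`_i)%Z) ->
  (forall j : nat, (j <= ((size f).-1)./2)%N -> ((p ^ 2)%N%:Z %| f`_j)%Z) ->
  ~ ((p ^ 3)%N%:Z %| f`_0)%Z ->
  (odd (size f).-1 -> irreducibleZ f) /\
  (~~ odd (size f).-1 ->
     irreducibleZ f \/
     exists g h : {poly int},
       [/\ f = g * h, irreducibleZ g /\ irreducibleZ h,
           size g = size h & eisensteinZ p g /\ eisensteinZ p h]).
Proof.
move=> pp Hl Hd Hd2 H3.
have ncf : nonconstZ f.
  rewrite /nonconstZ ltnNge; apply/negP => s1.
  apply: Hl; have := Hd2 0%N isT.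
  rewrite (arith8 s1).
  by rewrite e2; apply: dvdz_trans; apply: dvdz_mull.
have eqs : forall g h, f = g * h -> nonconstZ g -> nonconstZ h -> size g = size h.
  move=> g h Hf ng nh.
  have Hf' : f = h * g by rewrite Hf mulrC.
  case: (ltngtP (size g) (size h)) => // lt.
  - by exfalso; apply: (no_lt pp Hl Hd Hd2 H3 Hf ng nh lt).
  - by exfalso; apply: (no_lt pp Hl Hd Hd2 H3 Hf' nh ng lt).
have szf : forall g h, f = g * h -> nonconstZ g -> nonconstZ h ->
    (size f).-1 = ((size g) + (size h)).-1.-1.
  move=> g h Hf ng nh.
  have g0 : g != 0 by apply/eqP => g0; move: ng; rewrite /nonconstZ g0 size_poly0.
  have h0' : h != 0 by apply/eqP => h0'; move: nh; rewrite /nonconstZ h0' size_poly0.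
  by rewrite Hf size_mul.
split.
- move=> od; split => // -[g [h [ng nh Hf]]].
  by move: od; rewrite (negbTE (arith6 ng (eqs g h Hf ng nh) (szf g h Hf ng nh))).
- move=> _. case: (classic (reducibleZ f)) => [[g [h [ng nh Hf]]]|nr]; last by left.
  right; exists g, h.
  have Hf' : f = h * g by rewrite Hf mulrC.
  have [lg dg _ g0] := factor_props pp Hl Hd H3 Hf nh.
  have [lh dh _ h0] := factor_props pp Hl Hd H3 Hf' ng.
  have eg : eisensteinZ p g by split => //; exact: arith3.
  have eh : eisensteinZ p h by split => //; exact: arith3.
  split => //; last exact: eqs.
  by split; apply: (eis_irr pp).
Qed.
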